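(* Let $c\in\mathbb{N}$ and $I=\mathbb{N}\times[c]$. Then for any $\mathrm{Sym}$-invariant lattice $L\subseteq\mathbb{Z}^{(I)}$, the monoid $M=L\cap\mathbb{Z}_{\ge0}^{(I)}$ has a finite equivariant Hilbert basis.
   Context: $\mathbb{N}=\{1,2,\dots\}$. $\mathbb{Z}^{(I)}$ is the free abelian group with basis $I$ (standard basis $\mathbf{e}_{i,j}$), $\mathbb{Z}_{\ge0}^{(I)}$ its nonnegative vectors; a lattice is a subgroup. $\mathrm{Sym}$ is the group of permutations of $\mathbb{N}$ fixing all but finitely many points, acting by linear extension of $\sigma(\mathbf{e}_{i,j})=\mathbf{e}_{\sigma(i),j}$. A Hilbert basis of a monoid is a minimal generating set w.r.t. $\mathbb{Z}_{\ge0}$-linear combinations; $\mathcal{H}\subseteq M$ is an equivariant Hilbert basis if $\mathrm{Sym}(\mathcal{H})=\{\sigma(\mathbf{h})\mid\sigma\in\mathrm{Sym},\mathbf{h}\in\mathcal{H}\}$ is a Hilbert basis of $M$. *)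

(* Defs.v *)
From mathcomp Require Import all_boot all_order all_algebra.
From Stdlib Require List.
Set Implicit Arguments. Unset Strict Implicit. Unset Printing Implicit Defensive.
Import Order.TTheory GRing.Theory Num.Theory.
Local Open Scope ring_scope.

(* Vectors in Z^I, I = N x [c]; N is indexed by nat (0,1,2,...), [c] by 'I_c. *)
Definition vec (c : nat) := nat -> 'I_c -> int.

(* finite support: membership in Z^(I) *)
Definition fin_supp (c : nat) (v : vec c) : Prop :=
  exists n : nat, forall (i : nat) (j : 'I_c), (n <= i)%N -> v i j = 0.

Definition is_sym (s : nat -> nat) : Prop :=
  bijective s /\ exists n : nat, forall i : nat, (n <= i)%N -> s i = i.

(* w = s(v) where s(e_{i,j}) = e_{s(i),j}, i.e. w (s i) j = v i j *)
Definition sym_act (c : nat) (s : nat -> nat) (v w : vec c) : Prop :=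
  forall (i : nat) (j : 'I_c), w (s i) j = v i j.

Definition lattice (c : nat) (L : vec c -> Prop) : Prop :=
  (forall v, L v -> fin_supp v) /\
  L (fun _ _ => 0) /\
  (forall v w, L v -> L w -> L (fun i j => v i j - w i j)).

Definition sym_invariant (c : nat) (L : vec c -> Prop) : Prop :=
  forall (s : nat -> nat) (v w : vec c), is_sym s -> L v -> sym_act s v w -> L w.

Definition nonneg (c : nat) (v : vec c) : Prop :=
  fin_supp v /\ forall (i : nat) (j : 'I_c), 0 <= v i j.

Definition monoid_of (c : nat) (L : vec c -> Prop) : vec c -> Prop :=
  fun v => L v /\ nonneg v.

Definition nncomb (c : nat) (s : seq (nat * vec c)) : vec c :=
  fun i j => \sum_(p <- s) (p.1)%:Z * p.2 i j.

Definition generates (c : nat) (G M : vec c -> Prop) : Prop :=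
  forall m, M m -> exists s : seq (nat * vec c),
    (forall p, List.In p s -> G p.2) /\ m = nncomb s.

Definition hilbert_basis (c : nat) (G M : vec c -> Prop) : Prop :=
  (forall g, G g -> M g) /\ generates G M /\
  (forall G' : vec c -> Prop, (forall g, G' g -> G g) -> generates G' M ->
     forall g, G g -> G' g).

Definition sym_orbit (c : nat) (H : seq (vec c)) : vec c -> Prop :=
  fun w => exists (s : nat -> nat) (h : vec c),
    is_sym s /\ List.In h H /\ sym_act s h w.

Definition equiv_hilbert_basis (c : nat) (H : seq (vec c)) (M : vec c -> Prop) : Prop :=
  (forall h, List.In h H -> M h) /\ hilbert_basis (sym_orbit H) M.

(* Main.v *)
Require Import Defs.
From mathcomp Require Import all_boot all_order all_algebra.
From mathcomp Require Import zify.
From Stdlib Require Import Classical ClassicalEpsilon FunctionalExtensionality.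
From Stdlib Require List.
Set Implicit Arguments. Unset Strict Implicit. Unset Printing Implicit Defensive.

Definition goodR (X : Type) (R : X -> X -> Prop) (f : nat -> X) :=
  exists i j, (i < j)%N /\ R (f i) (f j).
Definition wqo (X : Type) (R : X -> X -> Prop) := forall f, goodR R f.

Lemma ex_min_P (Q : nat -> Prop) : (exists n, Q n) ->
  exists n, Q n /\ forall m, Q m -> (n <= m)%N.
Proof.
move=> [n Qn].
suff: forall N n, (n <= N)%N -> Q n -> exists n, Q n /\ forall m, Q m -> (n <= m)%N.
  by move=> /(_ n n (leqnn n) Qn).
elim=> [|N IH] k hk Qk; case: (classic (exists m, Q m /\ (m < k)%N)) => [[m [Qm lt]]|no].
- lia.
- exists k; split=> // m Qm; rewrite leqNgt; apply/negP=> lt; apply: no; by exists m.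
- apply: (IH m) => //; lia.
- exists k; split=> // m Qm; rewrite leqNgt; apply/negP=> lt; apply: no; by exists m.
Qed.

Lemma mono_of (g : nat -> nat) : (forall k, (g k < g k.+1)%N) ->
  forall k l, (k < l)%N -> (g k < g l)%N.
Proof.
move=> inc k; elim=> [//|l IH] kl.
rewrite ltnS leq_eqVlt in kl; case/orP: kl => [/eqP->|/IH h]; first exact: inc.
exact: ltn_trans h (inc l).
Qed.

Lemma chain_of X (R : X -> X -> Prop) (f : nat -> X) (g : nat -> nat) :
  (forall x y z, R x y -> R y z -> R x z) ->
  (forall k, R (f (g k)) (f (g k.+1))) ->
  forall k l, (k < l)%N -> R (f (g k)) (f (g l)).
Proof.
move=> Rt inc k; elim=> [//|l IH] kl.
rewrite ltnS leq_eqVlt in kl; case/orP: kl => [/eqP->|/IH h]; first exact: inc.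
exact: Rt h (inc l).
Qed.

Lemma wqo_chain X (R : X -> X -> Prop) :
  (forall x y z, R x y -> R y z -> R x z) -> wqo R ->
  forall f : nat -> X, exists g : nat -> nat,
    (forall k l, (k < l)%N -> (g k < g l)%N) /\
    (forall k l, (k < l)%N -> R (f (g k)) (f (g l))).
Proof.
move=> Rt w f.
have [N HN] : exists N, forall i, (N <= i)%N -> exists j, (i < j)%N /\ R (f i) (f j).
  apply: NNPP => Hn.
  have Ht : forall N, exists i, (N <= i)%N /\ forall j, (i < j)%N -> ~ R (f i) (f j).
    move=> N; apply: NNPP => Hn2; apply: Hn; exists N => i Ni.
    apply: NNPP => Hn3; apply: Hn2; exists i; split=> // j ij HR; apply: Hn3; by exists j.
  pose term N := proj1_sig (constructive_indefinite_description _ (Ht N)).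
  have termP N : (N <= term N)%N /\ forall j, (term N < j)%N -> ~ R (f (term N)) (f j).
    exact: (proj2_sig (constructive_indefinite_description _ (Ht N))).
  pose idx := fix idx k := if k is k'.+1 then term (idx k').+1 else term 0.
  have idxT : forall k j, (idx k < j)%N -> ~ R (f (idx k)) (f j).
    by case=> [|k] /=; apply termP.
  have inc : forall k, (idx k < idx k.+1)%N.
    by move=> k /=; have [h _] := termP (idx k).+1.
  have [k [l [kl Hkl]]] := w (fun k => f (idx k)).
  exact: (idxT k (idx l) (mono_of inc kl) Hkl).
have Hn' : forall i, exists j, (N <= i)%N -> (i < j)%N /\ R (f i) (f j).
  move=> i; case: (leqP N i) => Ni.
    by have [j hj] := HN i Ni; exists j.
  by exists 0.
pose nx i := proj1_sig (constructive_indefinite_description _ (Hn' i)).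
have nxP i : (N <= i)%N -> (i < nx i)%N /\ R (f i) (f (nx i)).
  exact: (proj2_sig (constructive_indefinite_description _ (Hn' i))).
pose g := fix g k := if k is k'.+1 then nx (g k') else N.
have gN : forall k, (N <= g k)%N /\ (g k < g k.+1)%N /\ R (f (g k)) (f (g k.+1)).
  elim=> [|k [h1 [h2 h3]]] /=.
    by have [a b] := nxP N (leqnn N).
  have hN : (N <= g k.+1)%N by apply: leq_trans h1 (ltnW h2).
  have [a b] := nxP _ hN.
  by split.
exists g; split.
  apply: mono_of => k; by have [_ [h _]] := gN k.
apply: (chain_of (f:=f) (g:=g) Rt) => k; by have [_ [_ h]] := gN k.
Qed.

Lemma wqo_nat : wqo (fun a b : nat => (a <= b)%N).
Proof.
move=> f.
have [v [[i fi] mn]] := ex_min_P (Q := fun v => exists i, f i = v) (ex_intro _ (f 0) (ex_intro _ 0 erefl)).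
exists i, i.+1; split=> //; rewrite fi; apply: mn; by exists i.+1.
Qed.

Lemma wqo_proj X (phis : seq (X -> nat)) :
  wqo (fun u v => forall p, List.In p phis -> (p u <= p v)%N).
Proof.
elim: phis => [|phi ps IH] f.
  by exists 0, 1.
have [g [gm gc]] := wqo_chain (R := fun u v => forall p, List.In p ps -> (p u <= p v)%N)
   (fun x y z h1 h2 p hp => leq_trans (h1 p hp) (h2 p hp)) IH f.
have [k [l [kl H]]] := wqo_nat (fun k => phi (f (g k))).
exists (g k), (g l); split; first exact: gm.
move=> p [<-|hp] //; exact: gc.
Qed.

Definition Rc c (u v : 'I_c -> nat) := forall j, (u j <= v j)%N.

Lemma wqo_Rc c : wqo (@Rc c).
Proof.
have inl : forall (s : seq 'I_c) j, j \in s ->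
    List.In (fun u : 'I_c -> nat => u j) [seq (fun u : 'I_c -> nat => u j0) | j0 <- s].
  elim=> [//|a s IH] j; rewrite in_cons; case/orP=> [/eqP->|/IH h]; [by left|by right].
move=> f; have [i [j [ij H]]] := wqo_proj [seq (fun u : 'I_c -> nat => u j0) | j0 <- enum 'I_c] f.
exists i, j; split=> // t; apply: (H (fun u => u t)); apply: inl; by rewrite mem_enum.
Qed.

Inductive emb X (R : X -> X -> Prop) : seq X -> seq X -> Prop :=
| emb_nil t : emb R [::] t
| emb_skip s y t : emb R s t -> emb R s (y :: t)
| emb_cons x s y t : R x y -> emb R s t -> emb R (x :: s) (y :: t).

Lemma higman X (x0 : X) (R : X -> X -> Prop) :
  (forall x y z, R x y -> R y z -> R x z) -> wqo R -> wqo (emb R).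
Proof.
move=> Rt w f0; apply: NNPP => nf0.
pose bad (h : nat -> seq X) := forall i j, (i < j)%N -> ~ emb R (h i) (h j).
have bf0 : bad f0 by move=> i j ij e; apply: nf0; exists i, j.
pose P (pre : seq (seq X)) := exists h, bad h /\
   forall k, (k < size pre)%N -> h k = nth [::] pre k.
have stepE : forall pre, exists x, P pre -> P (rcons pre x) /\
    forall y, P (rcons pre y) -> (size x <= size y)%N.
  move=> pre; case: (classic (P pre)) => [Hp|Hn]; last by exists [::].
  have ex : exists n, exists y, P (rcons pre y) /\ size y = n.
    case: Hp => h [bh agr]; exists (size (h (size pre))), (h (size pre)); split=> //.
    exists h; split=> // k; rewrite nth_rcons size_rcons ltnS leq_eqVlt.
    case/orP=> [/eqP->|hk]; first by rewrite ltnn eqxx.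
    by rewrite hk; apply: agr.
  have [n [[y [Py sy]] mn]] := ex_min_P ex.
  exists y => _; split=> // y' Py'; rewrite sy; apply: mn; by exists y'.
pose step pre := proj1_sig (constructive_indefinite_description _ (stepE pre)).
have stepP pre : P pre -> P (rcons pre (step pre)) /\
    forall y, P (rcons pre y) -> (size (step pre) <= size y)%N.
  exact: (proj2_sig (constructive_indefinite_description _ (stepE pre))).
pose mb := fix mb n := if n is n'.+1 then rcons (mb n') (step (mb n')) else [::].
pose F n := step (mb n).
have Pmb : forall n, P (mb n).
  elim=> [|n IH] /=; first by exists f0; split=> // k; rewrite ltn0.
  exact: (stepP _ IH).1.
have size_mb : forall n, size (mb n) = n by elim=> //= n IH; rewrite size_rcons IH.
have nth_mb : forall n k, (k < n)%N -> nth [::] (mb n) k = F k.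
  elim=> [//|n IH] k; rewrite ltnS leq_eqVlt /= nth_rcons size_mb.
  case/orP=> [/eqP->|hk]; first by rewrite ltnn eqxx.
  by rewrite hk IH.
have Fbad : bad F.
  move=> i j ij e; have [h [bh agr]] := Pmb j.+1.
  apply: (bh i j ij); rewrite !agr ?size_mb ?nth_mb //; lia.
have Fmin : forall n y, P (rcons (mb n) y) -> (size (F n) <= size y)%N.
  by move=> n y; apply: (stepP _ (Pmb n)).2.
have Fne : forall n, F n = head x0 (F n) :: behead (F n).
  move=> n; case E: (F n) => [|a t] //; exfalso.
  apply: (Fbad n n.+1 (ltnSn n)); rewrite E; constructor.
pose a n := head x0 (F n).
pose t n := behead (F n).
have [g [gm gc]] := wqo_chain Rt w a.
have gge : forall m, (g 0 <= g m)%N.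
  by case=> [//|m]; apply: ltnW; apply: gm.
pose h m := if (m < g 0)%N then F m else t (g (m - g 0)).
have bh : bad h.
  move=> i j ij; rewrite /h; case: (ltnP i (g 0)) => ig; case: (ltnP j (g 0)) => jg.
  - exact: Fbad.
  - move=> e; apply: (Fbad i (g (j - g 0))); first by apply: leq_trans ig (gge _).
    rewrite (Fne (g (j - g 0))); by constructor.
  - lia.
  - move=> e; have hij : (i - g 0 < j - g 0)%N by lia.
    apply: (Fbad _ _ (gm _ _ hij)).
    rewrite (Fne (g (i - g 0))) (Fne (g (j - g 0))).
    by constructor; [apply: gc|].
have : P (rcons (mb (g 0)) (t (g 0))).
  exists h; split=> // k; rewrite size_rcons size_mb ltnS => kle.
  rewrite nth_rcons size_mb /h; case: (ltnP k (g 0)) => kg.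
    by rewrite nth_mb.
  have -> : k = g 0 by lia.
  by rewrite eqxx subnn.
move/Fmin; rewrite {1}(Fne (g 0)) /=; rewrite ltnn.
done.
Qed.

Definition finperm (p q : nat -> nat) :=
  cancel p q /\ cancel q p /\ exists B, forall m, (B <= m)%N -> p m = m.

Lemma finperm_id : finperm id id.
Proof. by split=> //; split=> //; exists 0. Qed.

Definition liftp (p : nat -> nat) m := if m is m'.+1 then (p m').+1 else 0.

Lemma finperm_lift p q : finperm p q -> finperm (liftp p) (liftp q).
Proof.
move=> [pq [qp [B HB]]]; split; first by case=> //= m; rewrite pq.
split; first by case=> //= m; rewrite qp.
exists B.+1; case=> //= m; rewrite ltnS => hm; by rewrite HB.
Qed.

Definition rotp B m := if (m < B)%N then m.+1 else if m == B then 0 else m.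
Definition rotq B m := if m == 0 then B else if (m <= B)%N then m.-1 else m.

Lemma finperm_rot B : finperm (rotp B) (rotq B).
Proof.
split; first by move=> m; rewrite /rotp /rotq; do !case: ifP; lia.
split; first by move=> m; rewrite /rotp /rotq; do !case: ifP; lia.
exists B.+1 => m hm; rewrite /rotp; do !case: ifP; lia.
Qed.

Lemma finperm_comp p1 q1 p2 q2 : finperm p1 q1 -> finperm p2 q2 ->
  finperm (fun m => p2 (p1 m)) (fun m => q1 (q2 m)).
Proof.
move=> [a1 [b1 [B1 H1]]] [a2 [b2 [B2 H2]]]; split; first by move=> m; rewrite a2 a1.
split; first by move=> m; rewrite b1 b2.
exists (maxn B1 B2) => m hm; rewrite H1 ?H2 //; lia.
Qed.

Lemma emb_perm X (x0 : X) (R : X -> X -> Prop) s t : emb R s t ->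
  exists p q, finperm p q /\ forall k, (k < size s)%N ->
    (p k < size t)%N /\ R (nth x0 s k) (nth x0 t (p k)).
Proof.
elim=> {s t}.
- move=> t; exists id, id; split=> //; exact: finperm_id.
- move=> s y t _ [p [q [fp H]]].
  exists (fun m => rotp (size t) (p m)), (fun m => q (rotq (size t) m)).
  split; first exact: finperm_comp fp (finperm_rot _).
  move=> k hk; have [h1 h2] := H k hk; rewrite /rotp h1 /=; by split.
- move=> x s y t Rxy _ [p [q [fp H]]].
  exists (liftp p), (liftp q); split; first exact: finperm_lift.
  case=> [|k] //= hk; have [h1 h2] := H k hk; by split.
Qed.
Import Order.TTheory GRing.Theory Num.Theory.
Local Open Scope ring_scope.

Lemma In_rcons T (s : seq T) a x : List.In x (rcons s a) <-> List.In x s \/ x = a.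
Proof.
elim: s => [|y s IH] /=; first by firstorder.
have := IH; firstorder.
Qed.

Lemma In_cat T (s1 s2 : seq T) x : List.In x (s1 ++ s2) <-> List.In x s1 \/ List.In x s2.
Proof.
elim: s1 => [|y s IH] /=; first by firstorder.
have := IH; firstorder.
Qed.

Definition le_vec c (a b : vec c) := forall i j, a i j <= b i j.
Definition nonzero c (a : vec c) := exists i j, a i j != 0.
Definition minimal c (L : vec c -> Prop) (m : vec c) := monoid_of L m /\ nonzero m /\
  forall a, monoid_of L a -> le_vec a m -> nonzero a -> forall i j, a i j = m i j.

Lemma mkM c (L : vec c -> Prop) : lattice L -> forall v, L v ->
  (forall i j, 0 <= v i j) -> monoid_of L v.
Proof. move=> [hf _] v Lv hv; split=> //; split=> //; exact: hf. Qed.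

Lemma sym_of_finperm p q : finperm p q -> Defs.is_sym p.
Proof. move=> [pq [qp [B HB]]]; split; [exact: Bijective pq qp | by exists B]. Qed.

Lemma sym_inv s : Defs.is_sym s -> exists s', Defs.is_sym s' /\ cancel s s' /\ cancel s' s.
Proof.
move=> [[g sg gs] [n Hn]]; exists g; split=> //; split; first exact: Bijective gs sg.
exists n => i hi; by rewrite -{1}(Hn i hi) sg.
Qed.

Lemma minimal_sym c (L : vec c -> Prop) s h w : lattice L -> sym_invariant L ->
  Defs.is_sym s -> minimal L h -> sym_act s h w -> minimal L w.
Proof.
move=> hL hS ss [[Lh [_ hnn]] [[i0 [j0 nz]] hmin]] act.
have [s' [ss' [c1 c2]]] := sym_inv ss.
have wE : forall k j, w k j = h (s' k) j by move=> k j; rewrite -act c2.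
split; first by apply: mkM => //; [exact: hS ss Lh act | move=> k j; rewrite wE].
split; first by exists (s i0), j0; rewrite act.
move=> a [La [_ ann]] aw [i1 [j1 anz]] k j.
pose a' := fun i j => a (s i) j.
have La' : L a' by apply: (hS s' a a' ss' La) => i jj; rewrite /a' c2.
have Ma' : monoid_of L a' by apply: mkM => // i jj; exact: ann.
have le' : le_vec a' h by move=> i jj; rewrite /a' -act; exact: aw.
have nz' : nonzero a' by exists (s' i1), j1; rewrite /a' c2.
have := hmin a' Ma' le' nz' (s' k) j; rewrite /a' c2 => ->; by rewrite wE.
Qed.

Definition wt c n (m : vec c) : nat := (\sum_(i < n) \sum_(j < c) `|m i j|)%N.

Lemma wt_add c n (a b : vec c) : (forall i j, 0 <= a i j) -> (forall i j, 0 <= b i j) ->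
  wt n (fun i j => a i j + b i j) = (wt n a + wt n b)%N.
Proof.
move=> ha hb; rewrite /wt -big_split; apply: eq_bigr => i _; rewrite -big_split.
apply: eq_bigr => j _ /=; move: (ha i j) (hb i j).
by case: (a i j) => // x; case: (b i j).
Qed.

Lemma wt_pos c n (a : vec c) i j : (i < n)%N -> a i j != 0 -> (0 < wt n a)%N.
Proof.
move=> hi nz; rewrite /wt (bigD1 (Ordinal hi)) //= (bigD1 j) //=.
have : (0 < `|a i j|)%N by rewrite absz_gt0.
lia.
Qed.

Lemma gen_min c (L : vec c -> Prop) : lattice L -> forall m, monoid_of L m ->
  exists s : seq (nat * vec c), (forall p, List.In p s -> minimal L p.2) /\ m = nncomb s.
Proof.
move=> hL.
suff H : forall N m n, monoid_of L m -> (forall i j, (n <= i)%N -> m i j = 0) ->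
    (wt n m < N)%N ->
    exists s : seq (nat * vec c), (forall p, List.In p s -> minimal L p.2) /\ m = nncomb s.
  move=> m Mm; have [_ [[n hn] _]] := Mm; exact: (H _ m n Mm hn (ltnSn _)).
elim=> [//|N IH] m n Mm supp wle.
case: (classic (nonzero m)) => nzm.
  case: (classic (minimal L m)) => mm.
    exists [:: (1%N, m)]; split; first by move=> p [<-|[]].
    apply: functional_extensionality => i; apply: functional_extensionality => j.
    by rewrite /nncomb big_cons big_nil /= mul1r addr0.
  have [a [Ma [am [nza [i0 [j0 neq]]]]]] : exists a, monoid_of L a /\ le_vec a m /\
      nonzero a /\ exists i j, a i j != m i j.
    apply: NNPP => Hn; apply: mm; split=> //; split=> // a Ma am nza i j.
    apply/eqP; apply: NNPP => neq; apply: Hn; exists a; do 3 split => //.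
    by exists i, j; apply/negP.
  have [La [_ ann]] := Ma.
  have [Lm [_ mnn]] := Mm.
  pose b := fun i j => m i j - a i j.
  have Lb : L b by apply: hL.2.2.
  have Mb : monoid_of L b by apply: mkM => // i j; rewrite /b subr_ge0.
  have suppa : forall i j, (n <= i)%N -> a i j = 0.
    move=> i j hi; apply/eqP; rewrite eq_le ann andbT -(supp i j hi); exact: am.
  have suppb : forall i j, (n <= i)%N -> b i j = 0.
    by move=> i j hi; rewrite /b supp // suppa // subr0.
  have nzb : nonzero b by exists i0, j0; rewrite /b subr_eq0 eq_sym.
  have wm : wt n m = (wt n a + wt n b)%N.
    rewrite -wt_add //; last by move=> i j; rewrite /b subr_ge0.
    congr (wt n _); apply: functional_extensionality => i.
    by apply: functional_extensionality => j; rewrite /b addrC subrK.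
  have pos : forall v : vec c, nonzero v -> (forall i j, (n <= i)%N -> v i j = 0) ->
      (0 < wt n v)%N.
    move=> v [i [j nz]] sv; case: (ltnP i n) => hi; first exact: wt_pos hi nz.
    by rewrite sv in nz.
  have pa := pos a nza suppa.
  have pb := pos b nzb suppb.
  have [sa [sam ea]] := IH a n Ma suppa ltac:(lia).
  have [sb [sbm eb]] := IH b n Mb suppb ltac:(lia).
  exists (sa ++ sb); split.
    by move=> p /In_cat [/sam|/sbm].
  apply: functional_extensionality => i; apply: functional_extensionality => j.
  rewrite /nncomb big_cat /=.
  have -> : m i j = a i j + b i j by rewrite /b addrC subrK.
  by rewrite ea eb.
exists [::]; split=> //.
apply: functional_extensionality => i; apply: functional_extensionality => j.
rewrite /nncomb big_nil; case E: (m i j == 0); first exact/eqP.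
exfalso; apply: nzm; exists i, j; by rewrite E.
Qed.

Lemma nncomb_nz c (s : seq (nat * vec c)) i j : nncomb s i j != 0 ->
  exists p, List.In p s /\ (0 < p.1)%N /\ p.2 i j != 0.
Proof.
elim: s => [|p s IH]; rewrite /nncomb ?big_nil ?big_cons ?eqxx //.
case: (boolP (p.1%:Z * p.2 i j == 0)) => [/eqP->|hz].
  by rewrite add0r => /IH [pp [a b]]; exists pp; split=> //; right.
move=> _; exists p; split; first by left.
move: hz; rewrite mulf_eq0 negb_or => /andP [h1 h2]; split=> //.
by rewrite lt0n; apply: contra h1 => /eqP ->.
Qed.

Lemma nncomb_ge0 c (s : seq (nat * vec c)) i j :
  (forall p, List.In p s -> 0 <= p.2 i j) -> 0 <= nncomb s i j.
Proof.
elim: s => [|p s IH] hnn; rewrite /nncomb ?big_nil ?big_cons //.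
apply: addr_ge0; first by apply: mulr_ge0 => //; apply: hnn; left.
by apply: IH => pp hp; apply: hnn; right.
Qed.

Lemma nncomb_le c (s : seq (nat * vec c)) p i j :
  (forall p, List.In p s -> 0 <= p.2 i j) -> List.In p s -> (0 < p.1)%N ->
  p.2 i j <= nncomb s i j.
Proof.
elim: s => [//|p0 s IH] hnn /= hin hp; rewrite /nncomb big_cons.
have hs : 0 <= nncomb s i j by apply: nncomb_ge0 => pp h; apply: hnn; right.
have h0 : 0 <= p0.2 i j by apply: hnn; left.
case: hin => [E|hin].
  subst p0; rewrite /nncomb in hs.
  have h1 : 1 <= p.1%:Z by rewrite lez_nat.
  apply: ler_wpDr => //; exact: ler_peMl.
have := IH (fun pp h => hnn pp (or_intror h)) hin hp; rewrite /nncomb => h2.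
apply: ler_wpDl => //; exact: mulr_ge0.
Qed.
Local Close Scope ring_scope.

Lemma seq_good c (x : nat -> vec c) : (forall k, nonneg (x k)) ->
  exists i j, (i < j)%N /\ exists p q, finperm p q /\
    forall k jj, (x i k jj <= x j (p k) jj)%R.
Proof.
move=> hx.
pose bnd k := proj1_sig (constructive_indefinite_description _ (hx k).1).
have bndP k : forall i jj, (bnd k <= i)%N -> x k i jj = 0%R.
  exact: (proj2_sig (constructive_indefinite_description _ (hx k).1)).
pose rep k := mkseq (fun i (jj : 'I_c) => `|x k i jj|%N) (bnd k).
have [i [j [ij e]]] := higman (fun _ : 'I_c => 0%N) (R := @Rc c)
   (fun u v w h1 h2 jj => leq_trans (h1 jj) (h2 jj)) (@wqo_Rc c) rep.
have [p [q [fp H]]] := emb_perm (fun _ : 'I_c => 0%N) e.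
exists i, j; split=> //; exists p, q; split=> // k jj.
have nn1 := (hx i).2 k jj.
have nn2 := (hx j).2 (p k) jj.
case: (ltnP k (bnd i)) => hk; last by rewrite bndP.
have hk' : (k < size (rep i))%N by rewrite size_mkseq.
have [h1 h2] := H k hk'.
move: (h2 jj); rewrite /rep size_mkseq in h1.
rewrite !nth_mkseq //.
by rewrite -(gez0_abs nn1) -(gez0_abs nn2) lez_nat.
Qed.

Theorem lemma4p13 (c : nat) (hc : (0 < c)%N) (L : vec c -> Prop) :
  lattice L -> sym_invariant L ->
  exists H : seq (vec c), equiv_hilbert_basis H (monoid_of L).
Proof.
move=> hL hS.
have key : exists H : seq (vec c), (forall h, List.In h H -> minimal L h) /\
    (forall m, minimal L m -> sym_orbit H m).
  apply: NNPP => nH.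
  have nx : forall H : seq (vec c), exists m, (forall h, List.In h H -> minimal L h) ->
      minimal L m /\ ~ sym_orbit H m.
    move=> H; case: (classic (forall h, List.In h H -> minimal L h)) => HH; last first.
      by exists (fun _ _ => 0%R) => /HH.
    apply: NNPP => nm; apply: nH; exists H; split=> // m mm; apply: NNPP => no.
    by apply: nm; exists m.
  pose next H := proj1_sig (constructive_indefinite_description _ (nx H)).
  have nextP H : (forall h, List.In h H -> minimal L h) ->
      minimal L (next H) /\ ~ sym_orbit H (next H).
    exact: (proj2_sig (constructive_indefinite_description _ (nx H))).
  pose pre := fix pre n := if n is n'.+1 then rcons (pre n') (next (pre n')) else [::].
  pose xs n := next (pre n).
  have preP : forall n h, List.In h (pre n) -> minimal L h.
    elim=> [//|n IH] h /= /In_rcons [/IH //|->]; exact: (nextP _ IH).1.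
  have xsP n : minimal L (xs n) /\ ~ sym_orbit (pre n) (xs n) := nextP _ (preP n).
  have inpre : forall i j, (i < j)%N -> List.In (xs i) (pre j).
    move=> i; elim=> [//|j IH]; rewrite ltnS leq_eqVlt => /orP [/eqP->|/IH h] /=;
      apply/In_rcons; [right|left] => //.
  have nnx : forall k, nonneg (xs k) by move=> k; have [[_ ?] _] := (xsP k).1.
  have [i [j [ij [p [q [fp le]]]]]] := seq_good nnx.
  have [[[Li nni] [nzi _]] _] := xsP i.
  have [[Mj [_ minj]] nso] := xsP j.
  have sp := sym_of_finperm fp.
  have [pq [qp _]] := fp.
  pose u := fun k jj => xs i (q k) jj.
  have Lu : L u by apply: (hS p (xs i) u sp Li) => k jj; rewrite /u pq.
  have Mu : monoid_of L u by apply: mkM => // k jj; exact: nni.2.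
  have ule : le_vec u (xs j) by move=> k jj; rewrite /u -{2}(qp k); exact: le.
  have unz : nonzero u by case: nzi => k [jj nz]; exists (p k), jj; rewrite /u pq.
  have ueq := minj u Mu ule unz.
  apply: nso; exists p, (xs i); split=> //; split; first exact: inpre.
  by move=> k jj; rewrite -ueq /u pq.
have [H [Hmin Hall]] := key.
exists H; split; first by move=> h /Hmin [].
have orbmin : forall g, sym_orbit H g -> minimal L g.
  move=> g [s [h [ss [hin act]]]]; exact: minimal_sym hL hS ss (Hmin h hin) act.
split; first by move=> g /orbmin [].
split.
  move=> m Mm; have [s [smin ->]] := gen_min hL Mm; exists s; split=> // p /smin.
  exact: Hall.
move=> G' sub genG g og.
have [Mg [[i [j nz]] gmin]] := orbmin g og.
have [s [sG ge]] := genG g Mg.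
have nz' : nncomb s i j != 0%R by rewrite -ge.
have [pr [ins [p1 p2]]] := nncomb_nz nz'.
have pm := orbmin _ (sub _ (sG _ ins)).
have le2 : le_vec pr.2 g.
  move=> k jj; rewrite ge; apply: nncomb_le => // pp hpp.
  by have [[_ [_ ?]] _] := orbmin _ (sub _ (sG _ hpp)).
have eq := gmin pr.2 pm.1 le2 (ex_intro _ i (ex_intro _ j p2)).
have -> : g = pr.2.
  apply: functional_extensionality => k; apply: functional_extensionality => jj.
  by rewrite eq.
exact: sG.
Qed.
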